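(* For any positive integer $k$, in $\mathfrak{h}^1_t[[u]]$, $$\frac{1}{1-z_ku}=\exp_{\ast_t}\left(\sum_{n=1}^\infty\frac1n d_n(t)z_{nk}u^n\right).$$ In particular, if $k\ge2$, $$1+\sum_{n=1}^\infty\zeta^t(\{k\}^n)u^n=\exp\left(\sum_{n=1}^\infty\frac1nd_n(t)\zeta(nk)u^n\right).$$
   Context: $u$ is a variable commuting with everything; $d_n(t)=t^n-(t-1)^n$; $\{k\}^n$ is $n$ repetitions of $k$. $\mathfrak{h}_t=\mathbb{Q}[t]\langle x,y\rangle$, $\mathfrak{h}^1_t=\mathbb{Q}[t]+\mathfrak{h}_ty$, $z_k=x^{k-1}y$, $\frac1{1-z_ku}=\sum_{n\ge0}z_k^nu^n$ (concatenation powers). For a word $w$, $\delta(w)=1$ if $w=1$, else $0$. The $t$-harmonic product $\ast_t$ on $\mathfrak{h}^1_t$ is the commutative, associative $\mathbb{Q}[t]$-bilinear product with $1\ast_t w=w\ast_t1=w$ and $z_kw_1\ast_t z_lw_2=z_k(w_1\ast_t z_lw_2)+z_l(z_kw_1\ast_t w_2)+(1-2t)z_{k+l}(w_1\ast_t w_2)+[1-\delta(w_1)\delta(w_2)](t^2-t)x^{k+l}(w_1\ast_t w_2)$ for words $w_1,w_2\in\mathfrak{h}^1_t$; it is extended coefficientwise to power series in $u$, and $\exp_{\ast_t}(X)=\sum_{m\ge0}X^{\ast_t m}/m!$. For $k_1\ge2$, $\zeta(k_1,\ldots,k_n)=\sum_{m_1>\cdots>m_n>0}\prod m_j^{-k_j}$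 and $\zeta^t(k_1,\ldots,k_n)=\sum_{\mathbf p}t^{n-\mathrm{dep}(\mathbf p)}\zeta(\mathbf p)$, summed over sequences $\mathbf p$ obtained from $(k_1,\ldots,k_n)$ by replacing each separating comma by a comma or a plus sign ($\mathrm{dep}$ = length). *)

(* Defs.v *)
From HB Require Import structures.
From mathcomp Require Import all_boot all_order all_algebra.
From mathcomp Require Import all_classical all_reals all_analysis.
Set Implicit Arguments. Unset Strict Implicit. Unset Printing Implicit Defensive.
Import Order.TTheory GRing.Theory Num.Theory numFieldNormedType.Exports.
Local Open Scope ring_scope.

(* A word of h^1_t, z_{k1} ... z_{kn} (z_k = x^(k-1) y), is represented by
   its index sequence [:: k1; ...; kn] (the empty sequence is the word 1). *)
Definition word := seq nat.

(* An element of h^1_t as a formal Q[t]-linear combination of words;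
   two combinations are equal iff they have the same coefficients (lccoef). *)
Definition lc := seq ({poly rat} * word).

Definition lccoef (A : lc) (w : word) : {poly rat} :=
  \sum_(a <- A | a.2 == w) a.1.

Definition lcons (k : nat) (A : lc) : lc := [seq (a.1, k :: a.2) | a <- A].
(* x^j . A, using x^j z_m w = z_(j+m) w (only applied to combinations of
   nonempty words) *)
Definition lprepx (j : nat) (A : lc) : lc :=
  [seq (a.1, if a.2 is m :: w then (j + m)%N :: w else a.2) | a <- A].
Definition lscale (c : {poly rat}) (A : lc) : lc := [seq (c * a.1, a.2) | a <- A].

Fixpoint tharm (w1 w2 : word) {struct w1} : lc :=
  match w1 with
  | [::] => [:: (1, w2)]
  | k :: w1' =>
    let fix aux (w2 : word) : lc :=
      match w2 with
      | [::] => [:: (1, k :: w1')]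
      | l :: w2' =>
          lcons k (tharm w1' w2) ++ lcons l (aux w2')
          ++ lcons (k + l)%N (lscale (1 - 'X *+ 2) (tharm w1' w2'))
          ++ (if (w1' == [::]) && (w2' == [::]) then [::]
              else lprepx (k + l)%N (lscale ('X ^+ 2 - 'X) (tharm w1' w2')))
      end in aux w2
  end.

Definition lcmul (A B : lc) : lc :=
  flatten [seq [seq (a.1 * b.1 * c.1, c.2) | c <- tharm a.2 b.2] | a <- A, b <- B].

(* power series in u with coefficients in h^1_t: coefficient of u^N *)
Definition hps := nat -> lc.
Definition hps_mul (F G : hps) : hps := fun N =>
  flatten [seq lcmul (F i) (G (N - i)%N) | i <- iota 0 N.+1].
Definition hps_one : hps := fun N => if N == 0%N then [:: (1, [::])] else [::].
Definition hps_pow (F : hps) (m : nat) : hps := iter m (hps_mul F) hps_one.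
Definition hps_exp_trunc (M : nat) (F : hps) : hps := fun N =>
  flatten [seq lscale ((m`!)%:R^-1)%:P (hps_pow F m N) | m <- iota 0 M.+1].

Definition dpoly (R : nzRingType) (n : nat) : {poly R} := 'X ^+ n - ('X - 1) ^+ n.

Definition geom_z (k : nat) : hps := fun N => [:: (1, nseq N k)].
Definition logX (k : nat) : hps := fun N =>
  if N == 0%N then [::] else [:: (((N%:R)^-1)%:P * dpoly rat N, [:: (N * k)%N])].

Fixpoint zeta_trunc (R : realType) (M : nat) (ks : seq nat) : R :=
  match ks with
  | [::] => 1
  | k :: ks' => \sum_(1 <= m < M) ((m%:R : R) ^- k) * zeta_trunc R m ks'
  end.

Definition mzv (R : realType) (ks : seq nat) : R :=
  limn (fun M => zeta_trunc R M ks).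

(* all sequences obtained from ks by replacing each comma by "," or "+" *)
Fixpoint compl (ks : seq nat) : seq (seq nat) :=
  match ks with
  | [::] => [:: [::]]
  | [:: k] => [:: [:: k]]
  | k :: ks' =>
      [seq k :: p | p <- compl ks'] ++
      [seq (k + head 0%N p)%N :: behead p | p <- compl ks']
  end.

Definition zetat (R : realType) (ks : seq nat) : {poly R} :=
  \sum_(p <- compl ks) 'X ^+ (size ks - size p) * (mzv R p)%:P.

Definition ps_mul (A : comNzRingType) (F G : nat -> A) : nat -> A := fun N =>
  \sum_(i < N.+1) F i * G (N - i)%N.
Definition ps_one (A : comNzRingType) : nat -> A := fun N => if N == 0%N then 1 else 0.
Definition ps_pow (A : comNzRingType) (F : nat -> A) (m : nat) : nat -> A :=
  iter m (ps_mul F) (@ps_one A).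

Definition zlog (R : realType) (k : nat) : nat -> {poly R} := fun N =>
  if N == 0%N then 0 else ((N%:R)^-1)%:P * dpoly R N * (mzv R [:: (N * k)%N])%:P.
Definition ps_exp_trunc (R : realType) (M : nat) (F : nat -> {poly R}) : nat -> {poly R} :=
  fun N => \sum_(m < M.+1) ((m`!)%:R^-1)%:P * ps_pow F m N.

(* Main.v *)
Require Import Defs.
From HB Require Import structures.
From mathcomp Require Import all_boot all_order all_algebra.
From mathcomp Require Import all_classical all_reals all_analysis.
From mathcomp Require Import ring lra zify.
Set Implicit Arguments. Unset Strict Implicit. Unset Printing Implicit Defensive.
Import Order.TTheory GRing.Theory Num.Theory.
Local Open Scope ring_scope.

Module Helpers.

Definition lin (F : word -> {poly rat}) (A : lc) : {poly rat} := \sum_(a <- A) a.1 * F a.2.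
Definition px (j : nat) (v : word) : word := if v is m :: w then (j + m)%N :: w else v.

Lemma lin_nil F : lin F [::] = 0. Proof. by rewrite /lin big_nil. Qed.
Lemma lin_cons F a A : lin F (a :: A) = a.1 * F a.2 + lin F A. Proof. by rewrite /lin big_cons. Qed.
Lemma lin_cat F A B : lin F (A ++ B) = lin F A + lin F B. Proof. by rewrite /lin big_cat. Qed.
Lemma lin_flatten F L : lin F (flatten L) = \sum_(A <- L) lin F A.
Proof. elim: L => [|A L IH]; first by rewrite big_nil lin_nil. by rewrite /= lin_cat IH big_cons. Qed.
Lemma lin_lcons F k A : lin F (lcons k A) = lin (fun v => F (k :: v)) A.
Proof. by rewrite /lin /lcons big_map. Qed.
Lemma lin_lprepx F j A : lin F (lprepx j A) = lin (fun v => F (px j v)) A.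
Proof. rewrite /lin /lprepx big_map; apply: eq_bigr => -[c [|m w]] _ //. Qed.
Lemma lin_lscale F c A : lin F (lscale c A) = c * lin F A.
Proof. rewrite /lin /lscale big_map mulr_sumr; apply: eq_bigr => a _ /=; by rewrite mulrA. Qed.
Lemma lin_ext F G A : (forall v, F v = G v) -> lin F A = lin G A.
Proof. by move=> h; apply: eq_bigr => a _; rewrite h. Qed.
Lemma lin_addF F G A : lin (fun v => F v + G v) A = lin F A + lin G A.
Proof. by rewrite /lin -big_split; apply: eq_bigr => a _ /=; rewrite mulrDr. Qed.
Lemma lin_scaleF c F A : lin (fun v => c * F v) A = c * lin F A.
Proof. rewrite /lin mulr_sumr; apply: eq_bigr => a _ /=; by rewrite mulrCA. Qed.
Lemma lin_0F A : lin (fun _ => 0) A = 0.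
Proof. by rewrite /lin big1 // => a _; rewrite mulr0. Qed.
Lemma lccoef_lin A w : lccoef A w = lin (fun v => (v == w)%:R) A.
Proof. rewrite /lccoef /lin big_mkcond; apply: eq_bigr => a _ /=; case: eqP => _; by rewrite ?mulr1 ?mulr0. Qed.

Definition Tl (a : nat) (F : word -> {poly rat}) (v : word) := lin F (tharm [:: a] v).

Lemma Tl_nil a F : Tl a F [::] = F [:: a].
Proof. by rewrite /Tl /= lin_cons lin_nil mul1r addr0. Qed.

Lemma Tl_cons a F l w : Tl a F (l :: w) = F [:: a, l & w] + Tl a (fun u => F (l :: u)) w
  + (1 - 'X *+ 2) * F ((a + l)%N :: w)
  + (if w == [::] then 0 else ('X^2 - 'X) * F (px (a + l) w)).
Proof.
rewrite /Tl /= lin_cons lin_cat lin_lcons lin_cons mul1r mulr1 -!addrA; congr (_ + (_ + _)).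
congr (_ + _); case: w => [|m w] /=; first by rewrite lin_nil.
by rewrite lin_cons lin_nil addr0 mulr1.
Qed.

Arguments Tl : simpl never.
Arguments lin : simpl never.

Lemma Tl_ext a F G w : (forall u, F u = G u) -> Tl a F w = Tl a G w.
Proof. by move=> h; apply: lin_ext. Qed.
Lemma Tl_addF a F G w : Tl a (fun u => F u + G u) w = Tl a F w + Tl a G w.
Proof. exact: lin_addF. Qed.
Lemma Tl_scaleF a c F w : Tl a (fun u => c * F u) w = c * Tl a F w.
Proof. exact: lin_scaleF. Qed.

Lemma Tl_ne a F G w : (forall u, u != [::] -> F u = G u) -> Tl a F w = Tl a G w.
Proof.
elim: w F G => [|l w IH] F G h; first by rewrite !Tl_nil h.
rewrite !Tl_cons h // h // (@Tl_ext _ (fun u => F (l :: u)) (fun u => G (l :: u))) //.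
  by case: w {IH} => [|m w] //=; rewrite h.
by move=> u; rewrite h.
Qed.

Lemma Tl_comp_cons a b F l w : Tl a (fun u => Tl b F (l :: u)) w =
  Tl a (fun u => F [:: b, l & u]) w + Tl a (Tl b (fun u => F (l :: u))) w
  + (1 - 'X *+ 2) * Tl a (fun u => F ((b + l)%N :: u)) w
  + ('X^2 - 'X) * Tl a (fun u => F (px (b + l) u)) w.
Proof.
rewrite (@Tl_ne _ _ (fun u => F [:: b, l & u] + Tl b (fun u => F (l :: u)) u
  + (1 - 'X *+ 2) * F ((b + l)%N :: u) + ('X^2 - 'X) * F (px (b + l) u))).
  by rewrite !Tl_addF !Tl_scaleF.
by move=> u /negbTE hu; rewrite Tl_cons hu.
Qed.

Lemma pxpx i j v : px i (px j v) = px (i + j) v.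
Proof. by case: v => [|m v] //=; rewrite addnA. Qed.

Lemma Tl_comm a b F v : Tl a (Tl b F) v = Tl b (Tl a F) v.
Proof.
elim: v F => [|l w IH] F.
  rewrite !Tl_nil !Tl_cons !Tl_nil /= addnC. ring.
rewrite [Tl a _ (l :: w)]Tl_cons [Tl b _ (l :: w)]Tl_cons !Tl_comp_cons IH.
generalize (Tl b (Tl a (fun u => F (l :: u))) w) => X.
case: w {IH} => [|m w] /=.
  do 3 rewrite ?Tl_cons ?Tl_nil /=.
  rewrite !addnA [(b + a)%N]addnC.
  have -> : (b + l + a = a + b + l)%N by lia.
  have -> : (a + l + b = a + b + l)%N by lia.
  ring.
do 3 rewrite ?Tl_cons ?Tl_nil /=.
have E1 : (b + l + a = a + b + l)%N by lia.
have E2 : (a + l + b = a + b + l)%N by lia.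
rewrite !pxpx !addnA [(b + a)%N]addnC ?E1 ?E2.
ring.
Qed.


Arguments dpoly : simpl never.
Lemma drec j : dpoly rat j.+2 + (1 - 'X *+ 2) * dpoly rat j.+1 + ('X^2 - 'X) * dpoly rat j = 0.
Proof. rewrite /dpoly !exprS; ring. Qed.
Lemma dpoly0 : dpoly rat 0 = 0. Proof. by rewrite /dpoly !expr0 subrr. Qed.
Lemma dpoly1 : dpoly rat 1 = 1. Proof. rewrite /dpoly !expr1; ring. Qed.

Lemma dcomb (H : nat -> {poly rat}) N :
  \sum_(0 <= n < N.+2) dpoly rat n * H n
  + (1 - 'X *+ 2) * \sum_(0 <= n < N.+1) dpoly rat n * H n.+1
  + ('X^2 - 'X) * \sum_(0 <= n < N) dpoly rat n * H n.+2 = H 1%N.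
Proof.
rewrite big_nat_recl // big_nat_recl // [X in _ + _ * X + _]big_nat_recl //.
rewrite dpoly0 dpoly1 !mul0r mul1r !add0r.
rewrite !mulr_sumr.
set S1 := \sum_(0 <= i < N) _. set S2 := \sum_(0 <= i < N) _. set S3 := \sum_(0 <= i < N) _.
have E : S1 + (S2 + S3) = 0.
  rewrite addrA /S1 /S2 /S3 -!big_split /= big1_seq // => n _.
  by rewrite !mulrA -!mulrDl drec mul0r.
by rewrite -!addrA E addr0.
Qed.

Lemma newton k N F : N%:R * F (nseq N k) =
  \sum_(0 <= n < N.+1) dpoly rat n * Tl (n * k)%N F (nseq (N - n) k).
Proof.
elim: N F => [|N IH] F.
  by rewrite big_nat1 dpoly0 !mul0r.
rewrite big_nat_recr //=.
rewrite subnn Tl_nil.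
set H := fun j => F ((j * k)%N :: nseq (N.+1 - j) k).
rewrite (eq_big_nat _ _ (F2 := fun n => dpoly rat n * H n
   + dpoly rat n * Tl (n * k)%N (fun u => F (k :: u)) (nseq (N - n) k)
   + (1 - 'X *+ 2) * (dpoly rat n * H n.+1)
   + ('X^2 - 'X) * (dpoly rat n * (if nseq (N - n) k == [::] then 0 else H n.+2)))); last first.
  move=> n /andP [_ hn].
  have hnN : (n <= N)%N by rewrite -ltnS.
  rewrite subSn //.
  change (nseq (N - n).+1 k) with (k :: nseq (N - n) k).
  rewrite Tl_cons.
  have e3 : (if nseq (N - n) k == [::] then 0 else H n.+2) =
            (if nseq (N - n) k == [::] then 0 else F (px (n * k + k) (nseq (N - n) k))).
    case E: (N - n)%N => [|r] //.
    have hlt : (n < N)%N by rewrite -subn_gt0 E.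
    by rewrite /H /= subSS subnS E /= !mulSnr.
  rewrite e3 /H /= subSn // subSS mulSnr.
  case: (nseq (N - n) k == [::]); ring.
rewrite !big_split /= -IH -!mulr_sumr.
have -> : \sum_(0 <= i < N.+1) dpoly rat i * (if nseq (N - i) k == [::] then 0 else H i.+2)
   = \sum_(0 <= i < N) dpoly rat i * H i.+2.
  rewrite big_nat_recr //= subnn eqxx mulr0 addr0.
  apply: eq_big_nat => i /andP [_ hi].
  by case E: (N - i)%N => [|r] //; move: hi; rewrite -subn_gt0 E.
have -> : dpoly rat N.+1 * F [:: (N.+1 * k)%N] = dpoly rat N.+1 * H N.+1 by rewrite /H /= subnn.
set S1 := \sum_(0 <= i < N.+1) (dpoly rat i * H i).
have -> : S1 = \sum_(0 <= i < N.+2) (dpoly rat i * H i) - dpoly rat N.+1 * H N.+1.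
  by rewrite [in RHS]big_nat_recr //= addrK.
have h1 : H 1%N = F (k :: nseq N k) by rewrite /H /= mul1n subn1.
rewrite -h1 -(dcomb H N).
rewrite mulrSr mulrDl mul1r.
rewrite /S1; ring.
Qed.

Lemma lin_lcmul G A B : lin G (lcmul A B) =
  \sum_(a <- A) \sum_(b <- B) a.1 * b.1 * lin G (tharm a.2 b.2).
Proof.
rewrite /lcmul lin_flatten big_flatten big_map; apply: eq_bigr => a _.
rewrite big_map; apply: eq_bigr => b _.
rewrite /lin big_map mulr_sumr; apply: eq_bigr => x _ /=; by rewrite mulrA.
Qed.

Definition cc (i : nat) : {poly rat} := if i == 0%N then 0 else ((i%:R)^-1)%:P * dpoly rat i.

Lemma ncc n : n%:R * cc n = dpoly rat n.
Proof.
rewrite /cc; case: eqP => [->|/eqP hn]; first by rewrite mulr0 dpoly0.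
rewrite mulrA -polyC_natr -polyCM mulfV ?mul1r //.
by rewrite pnatr_eq0.
Qed.

Lemma lin_logX G k i B : lin G (lcmul (logX k i) B) = cc i * lin (Tl (i * k)%N G) B.
Proof.
rewrite lin_lcmul /logX /cc; case: eqP => _; first by rewrite big_nil mul0r.
rewrite big_cons big_nil addr0 /lin mulr_sumr; apply: eq_bigr => b _ /=.
by rewrite /Tl /lin mulrA.
Qed.

Section P.
Variable k : nat.
Definition PP m N := hps_pow (logX k) m N.

Lemma linP_S G m N : lin G (PP m.+1 N) =
  \sum_(0 <= i < N.+1) cc i * lin (Tl (i * k)%N G) (PP m (N - i)).
Proof.
rewrite /PP /= /hps_mul lin_flatten big_map; apply: eq_bigr => i _.
by rewrite lin_logX.
Qed.

Lemma linP_0 G N : lin G (PP 0 N) = if N == 0%N then G [::] else 0.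
Proof.
rewrite /PP /= /hps_one; case: eqP => _; last by rewrite lin_nil.
by rewrite lin_cons lin_nil mul1r addr0.
Qed.

Lemma linP_big G m N : (N < m)%N -> lin G (PP m N) = 0.
Proof.
elim: m N G => [|m IH] N G //= hN.
rewrite linP_S big1_seq // => i /andP [_]; rewrite mem_index_iota => /andP [_ hi].
case: i hi => [|i] hi; first by rewrite /cc /= mul0r.
by rewrite IH ?mulr0 //; lia.
Qed.

Lemma tri_swap (f : nat -> nat -> {poly rat}) N :
  \sum_(0 <= i < N.+1) \sum_(0 <= n < (N - i).+1) f i n =
  \sum_(0 <= n < N.+1) \sum_(0 <= i < (N - n).+1) f i n.
Proof.
have E : forall g : nat -> nat -> {poly rat},
   \sum_(0 <= i < N.+1) \sum_(0 <= n < (N - i).+1) g i n =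
   \sum_(0 <= i < N.+1) \sum_(0 <= n < N.+1 | (i + n <= N)%N) g i n.
  move=> g; apply: eq_big_nat => i /andP [_ hi].
  rewrite (@big_nat_widen _ _ _ 0 (N - i).+1 N.+1) /=; last by lia.
  apply: eq_bigl => n; apply/idP/idP; lia.
rewrite E (E (fun n i => f i n)).
rewrite (exchange_big_dep_nat predT) //=.
apply: eq_bigr => n _; apply: eq_bigl => i; by rewrite addnC.
Qed.

Lemma sum_last (f g : nat -> {poly rat}) N :
  \sum_(0 <= i < N.+1) f i * (if (N - i)%N == 0%N then g i else 0) = f N * g N.
Proof.
rewrite big_nat_recr //= subnn eqxx big1_seq ?add0r // => i /andP [_].
rewrite mem_index_iota => /andP [_ hi].
have -> : ((N - i)%N == 0%N) = false by apply/negbTE; lia.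
by rewrite mulr0.
Qed.

Lemma ode_P m N G : N%:R * lin G (PP m.+1 N) =
  m.+1%:R * \sum_(0 <= n < N.+1) dpoly rat n * lin (Tl (n * k)%N G) (PP m (N - n)).
Proof.
elim: m N G => [|m IH] N G.
  rewrite linP_S mul1r mulr_sumr.
  under eq_bigr do rewrite linP_0 mulrA.
  under [RHS]eq_bigr do rewrite linP_0.
  by rewrite sum_last sum_last -ncc.
rewrite linP_S [LHS]mulr_sumr.
have step : forall i, (0 <= i < N.+1)%N ->
  N%:R * (cc i * lin (Tl (i * k) G) (PP m.+1 (N - i))) =
  dpoly rat i * lin (Tl (i * k) G) (PP m.+1 (N - i)) +
  m.+1%:R * \sum_(0 <= n < (N - i).+1)
     cc i * (dpoly rat n * lin (Tl (i * k) (Tl (n * k) G)) (PP m (N - i - n))).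
  move=> i /andP [_ hi].
  have -> : N%:R = i%:R + (N - i)%:R :> {poly rat} by rewrite -natrD subnKC.
  rewrite mulrDl [X in X + _]mulrA ncc; congr (_ + _).
  rewrite mulrCA IH mulrCA; congr (_ * _).
  rewrite mulr_sumr; apply: eq_bigr => n _; congr (_ * (_ * _)).
  by apply: lin_ext => v; rewrite Tl_comm.
rewrite (eq_big_nat _ _ step) big_split /= -mulr_sumr tri_swap.
have -> : \sum_(0 <= n < N.+1) \sum_(0 <= i < (N - n).+1)
     cc i * (dpoly rat n * lin (Tl (i * k) (Tl (n * k) G)) (PP m (N - i - n)))
  = \sum_(0 <= n < N.+1) dpoly rat n * lin (Tl (n * k) G) (PP m.+1 (N - n)).
  apply: eq_bigr => n _; rewrite linP_S mulr_sumr; apply: eq_bigr => i _.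
  by rewrite mulrCA subnAC.
by rewrite [m.+2%:R]mulrSr mulrDl mul1r addrC.
Qed.

Definition ex M N G := \sum_(0 <= m < M.+1) ((m`!)%:R^-1)%:P * lin G (PP m N).

Lemma lin_exp M N G : lin G (hps_exp_trunc M (logX k) N) = ex M N G.
Proof.
rewrite /hps_exp_trunc lin_flatten big_map; apply: eq_bigr => m _; by rewrite lin_lscale.
Qed.

Lemma ex_trunc M N G : (N <= M)%N -> ex M N G = ex N N G.
Proof.
move=> hNM; rewrite /ex (big_cat_nat _ (n := N.+1)) //= [X in _ + X]big1_seq ?addr0 //.
move=> m /andP [_]; rewrite mem_index_iota => /andP [hm _].
by rewrite linP_big ?mulr0.
Qed.

Lemma fact_inv m : ((m.+1)`!%:R^-1)%:P * m.+1%:R = ((m`!)%:R^-1)%:P :> {poly rat}.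
Proof.
rewrite -polyC_natr -polyCM; congr polyC.
rewrite factS natrM invfM mulrAC mulVf ?mul1r // pnatr_eq0.
Qed.

Lemma ex_ode N G : N%:R * ex N N G =
  \sum_(0 <= n < N.+1) dpoly rat n * ex (N - n) (N - n) (Tl (n * k)%N G).
Proof.
case: N => [|N]; first by rewrite mul0r big_nat1 dpoly0 mul0r.
rewrite /ex big_nat_recl // linP_0 /= mulr0 add0r mulr_sumr.
have -> : \sum_(0 <= i < N.+1) N.+1%:R * (((i.+1)`!)%:R^-1%:P * lin G (PP i.+1 N.+1))
   = \sum_(0 <= i < N.+1) \sum_(0 <= n < N.+2) dpoly rat n *
        (((i`!)%:R^-1)%:P * lin (Tl (n * k) G) (PP i (N.+1 - n))).
  apply: eq_bigr => i _; rewrite mulrCA ode_P mulrA fact_inv mulr_sumr.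
  apply: eq_bigr => n _; by rewrite mulrCA.
rewrite exchange_big /=; apply: eq_big_nat => n /andP [_ hn].
case: n hn => [|n] hn; first by rewrite dpoly0 !mul0r big1 // => i _; rewrite mul0r.
rewrite -mulr_sumr; congr (_ * _).
have := ex_trunc (M := N) (N := (N.+1 - n.+1)%N) (Tl (n.+1 * k) G).
rewrite /ex => <-; last by lia.
by [].
Qed.

Lemma ex_geom N G : ex N N G = G (nseq N k).
Proof.
move: G; elim/ltn_ind: N => N IH G.
case: N IH => [|N] IH.
  by rewrite /ex big_nat1 linP_0 /= fact0 invr1 polyC1 mul1r.
apply: (@mulfI _ (N.+1%:R)); first by rewrite -polyC_natr polyC_eq0 pnatr_eq0.
rewrite ex_ode newton; apply: eq_big_nat => n /andP [_ hn].
case: n hn => [|n] hn; first by rewrite dpoly0 !mul0r.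
by rewrite IH //; lia.
Qed.

End P.

Lemma part1 k N M w : (N <= M)%N ->
  lccoef (geom_z k N) w = lccoef (hps_exp_trunc M (logX k) N) w.
Proof.
move=> h; rewrite !lccoef_lin lin_exp ex_trunc // ex_geom /geom_z lin_cons lin_nil.
by rewrite mul1r addr0.
Qed.

Arguments dpoly : simpl never.

Section ODE.
Variable R : realType.
Local Notation PR := {poly R}.

Definition solves (L F : nat -> PR) := F 0%N = 1 /\
  forall N, N%:R * F N = \sum_(0 <= n < N.+1) n%:R * L n * F (N - n)%N.

Lemma natr_neq0 n : n.+1%:R != 0 :> PR.
Proof. by rewrite -polyC_natr polyC_eq0 pnatr_eq0. Qed.

Lemma solves_uniq L F G : solves L F -> solves L G -> forall N, F N = G N.
Proof.
move=> [F0 HF] [G0 HG] N; elim/ltn_ind: N => N IH.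
case: N IH => [|N] IH; first by rewrite F0 G0.
apply: (@mulfI _ (N.+1%:R)); first exact: natr_neq0.
rewrite HF HG; apply: eq_big_nat => n /andP [_ hn].
case: n hn => [|n] hn; first by rewrite !mul0r.
by rewrite IH //; lia.
Qed.

Lemma solves_ext L1 L2 F1 F2 : (forall n, L1 n = L2 n) -> (forall n, F1 n = F2 n) ->
  solves L1 F1 -> solves L2 F2.
Proof.
move=> hL hF [F0 HF]; split; first by rewrite -hF.
move=> N; rewrite -hF HF; apply: eq_bigr => n _; by rewrite hL hF.
Qed.

Lemma tri_swapR (f : nat -> nat -> PR) N :
  \sum_(0 <= i < N.+1) \sum_(0 <= n < (N - i).+1) f i n =
  \sum_(0 <= n < N.+1) \sum_(0 <= i < (N - n).+1) f i n.
Proof.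
have E : forall g : nat -> nat -> PR,
   \sum_(0 <= i < N.+1) \sum_(0 <= n < (N - i).+1) g i n =
   \sum_(0 <= i < N.+1) \sum_(0 <= n < N.+1 | (i + n <= N)%N) g i n.
  move=> g; apply: eq_big_nat => i /andP [_ hi].
  rewrite (@big_nat_widen _ _ _ 0 (N - i).+1 N.+1) /=; last by lia.
  apply: eq_bigl => n; apply/idP/idP; lia.
rewrite E (E (fun n i => f i n)).
rewrite (exchange_big_dep_nat predT) //=.
apply: eq_bigr => n _; apply: eq_bigl => i; by rewrite addnC.
Qed.

Lemma sum_lastR (f g : nat -> PR) N :
  \sum_(0 <= i < N.+1) f i * (if (N - i)%N == 0%N then g i else 0) = f N * g N.
Proof.
rewrite big_nat_recr //= subnn eqxx big1_seq ?add0r // => i /andP [_].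
rewrite mem_index_iota => /andP [_ hi].
have -> : ((N - i)%N == 0%N) = false by apply/negbTE; lia.
by rewrite mulr0.
Qed.

Lemma ps_mulE (F G : nat -> PR) N : ps_mul F G N = \sum_(0 <= i < N.+1) F i * G (N - i)%N.
Proof. by rewrite /ps_mul big_mkord. Qed.

Lemma powS (L : nat -> PR) m N : ps_pow L m.+1 N = \sum_(0 <= i < N.+1) L i * ps_pow L m (N - i)%N.
Proof. by rewrite -ps_mulE. Qed.

Lemma pow0 (L : nat -> PR) N : ps_pow L 0 N = if N == 0%N then 1 else 0.
Proof. by []. Qed.

Lemma pow_big (L : nat -> PR) m N : L 0%N = 0 -> (N < m)%N -> ps_pow L m N = 0.
Proof.
move=> L0; elim: m N => [|m IH] N // hN.
rewrite powS big1_seq // => i /andP [_]; rewrite mem_index_iota => /andP [_ hi].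
case: i hi => [|i] hi; first by rewrite L0 mul0r.
by rewrite IH ?mulr0 //; lia.
Qed.

Lemma ode_pow (L : nat -> PR) m N : L 0%N = 0 -> N%:R * ps_pow L m.+1 N =
  m.+1%:R * \sum_(0 <= n < N.+1) n%:R * L n * ps_pow L m (N - n)%N.
Proof.
move=> L0; elim: m N => [|m IH] N.
  rewrite powS mul1r mulr_sumr.
  under eq_bigr do rewrite pow0 mulrA.
  under [RHS]eq_bigr do rewrite pow0.
  rewrite sum_lastR sum_lastR. reflexivity.
rewrite (powS L m.+1 N) [LHS]mulr_sumr.
have step : forall i, (0 <= i < N.+1)%N ->
  N%:R * (L i * ps_pow L m.+1 (N - i)) =
  i%:R * L i * ps_pow L m.+1 (N - i) +
  m.+1%:R * \sum_(0 <= n < (N - i).+1)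
     L i * (n%:R * L n * ps_pow L m (N - i - n)).
  move=> i /andP [_ hi].
  have -> : N%:R = i%:R + (N - i)%:R :> PR by rewrite -natrD subnKC.
  rewrite mulrDl [X in X + _]mulrA; congr (_ + _).
  rewrite mulrCA IH mulrCA; congr (_ * _); by rewrite mulr_sumr.
rewrite (eq_big_nat _ _ step) big_split /= -mulr_sumr tri_swapR.
have -> : \sum_(0 <= n < N.+1) \sum_(0 <= i < (N - n).+1)
     L i * (n%:R * L n * ps_pow L m (N - i - n))
  = \sum_(0 <= n < N.+1) n%:R * L n * ps_pow L m.+1 (N - n).
  apply: eq_bigr => n _; rewrite powS mulr_sumr; apply: eq_bigr => i _.
  by rewrite mulrCA subnAC.
by rewrite [m.+2%:R]mulrSr mulrDl mul1r addrC.
Qed.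

Lemma expE M (L : nat -> PR) N : ps_exp_trunc M L N =
  \sum_(0 <= m < M.+1) ((m`!)%:R^-1)%:P * ps_pow L m N.
Proof. by rewrite /ps_exp_trunc big_mkord. Qed.

Lemma exp_trunc (L : nat -> PR) M N : L 0%N = 0 -> (N <= M)%N -> ps_exp_trunc M L N = ps_exp_trunc N L N.
Proof.
move=> L0 hNM; rewrite !expE (big_cat_nat _ (n := N.+1)) //= [X in _ + X]big1_seq ?addr0 //.
move=> m /andP [_]; rewrite mem_index_iota => /andP [hm _].
by rewrite pow_big ?mulr0.
Qed.

Lemma fact_invR m : ((m.+1)`!%:R^-1)%:P * m.+1%:R = ((m`!)%:R^-1)%:P :> PR.
Proof.
rewrite -polyC_natr -polyCM; congr polyC.
rewrite factS natrM invfM mulrAC mulVf ?mul1r // pnatr_eq0.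
Qed.

Lemma exp_solves (L : nat -> PR) : L 0%N = 0 -> solves L (fun N => ps_exp_trunc N L N).
Proof.
move=> L0; split.
  by rewrite expE big_nat1 pow0 /= fact0 invr1 polyC1 mulr1.
case=> [|N]; first by rewrite mul0r big_nat1 !mul0r.
rewrite expE big_nat_recl // pow0 /= mulr0 add0r mulr_sumr.
have -> : \sum_(0 <= i < N.+1) N.+1%:R * (((i.+1)`!)%:R^-1%:P * ps_pow L i.+1 N.+1)
   = \sum_(0 <= i < N.+1) \sum_(0 <= n < N.+2) n%:R * L n *
        (((i`!)%:R^-1)%:P * ps_pow L i (N.+1 - n)).
  apply: eq_bigr => i _; rewrite mulrCA ode_pow // mulrA fact_invR mulr_sumr.
  apply: eq_bigr => n _; by rewrite mulrCA.
rewrite exchange_big /=; apply: eq_big_nat => n /andP [_ hn].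
case: n hn => [|n] hn; first by rewrite !mul0r big1 // => i _; rewrite mul0r.
rewrite -mulr_sumr; congr (_ * _).
rewrite -expE exp_trunc //; lia.
Qed.

End ODE.

Arguments dpoly : simpl never.

Section Prod.
Variable R : realType.
Local Notation PR := {poly R}.

Lemma ps_mulC (F G : nat -> PR) N : ps_mul F G N = ps_mul G F N.
Proof.
rewrite !ps_mulE big_nat_rev /=; apply: eq_big_nat => i /andP [_ hi].
by rewrite add0n subSS subKn 1?mulrC //; lia.
Qed.

Lemma half (L2 F1 F2 : nat -> PR) :
  (forall N, N%:R * F2 N = \sum_(0 <= n < N.+1) n%:R * L2 n * F2 (N - n)%N) ->
  forall N, \sum_(0 <= i < N.+1) F1 i * ((N - i)%:R * F2 (N - i)%N) =
  \sum_(0 <= n < N.+1) n%:R * L2 n * ps_mul F1 F2 (N - n).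
Proof.
move=> H2 N.
under eq_bigr do rewrite H2 mulr_sumr.
rewrite tri_swapR; apply: eq_bigr => n _.
rewrite ps_mulE mulr_sumr; apply: eq_bigr => i _.
by rewrite mulrCA subnAC.
Qed.

Lemma solves_mul (L1 L2 F1 F2 : nat -> PR) : solves L1 F1 -> solves L2 F2 ->
  solves (fun n => L1 n + L2 n) (ps_mul F1 F2).
Proof.
move=> [F10 H1] [F20 H2]; split.
  by rewrite ps_mulE big_nat1 F10 F20 mulr1.
move=> N; rewrite ps_mulE mulr_sumr.
have -> : \sum_(0 <= i < N.+1) N%:R * (F1 i * F2 (N - i)%N) =
   \sum_(0 <= i < N.+1) F2 i * ((N - i)%:R * F1 (N - i)%N) +
   \sum_(0 <= i < N.+1) F1 i * ((N - i)%:R * F2 (N - i)%N).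
  have -> : \sum_(0 <= i < N.+1) F2 i * ((N - i)%:R * F1 (N - i)%N) =
      \sum_(0 <= i < N.+1) F2 (N - i)%N * (i%:R * F1 i).
    rewrite big_nat_rev /=; apply: eq_big_nat => i /andP [_ hi].
    by rewrite add0n subSS subKn //; lia.
  rewrite -big_split /=; apply: eq_big_nat => i /andP [_ hi].
  have -> : N%:R = (N - i)%:R + i%:R :> PR by rewrite -natrD subnK //; lia.
  ring.
rewrite (half F2 H1) (half F1 H2) -big_split /=; apply: eq_bigr => n _.
by rewrite ps_mulC mulrDr mulrDl.
Qed.

Definition gg (y : R) (j : nat) : PR := if j == 0%N then 1 else 'X^(j.-1) * (y ^+ j)%:P.
Definition Lg (y : R) (n : nat) : PR :=
  if n == 0%N then 0 else ((n%:R)^-1)%:P * dpoly R n * (y ^+ n)%:P.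

Lemma dpoly0R : dpoly R 0 = 0. Proof. by rewrite /dpoly !expr0 subrr. Qed.

Lemma nLg y n : n%:R * Lg y n = dpoly R n * (y ^+ n)%:P.
Proof.
rewrite /Lg; case: eqP => [->|/eqP hn]; first by rewrite mulr0 dpoly0R mul0r.
rewrite !mulrA -polyC_natr -polyCM mulfV ?mul1r //.
by rewrite pnatr_eq0.
Qed.

Lemma dsum N : \sum_(0 <= n < N.+1) dpoly R n * 'X^(N - n) + dpoly R N.+1 = N.+1%:R * 'X^N.
Proof.
elim: N => [|N IH].
  by rewrite big_nat1 dpoly0R mul0r add0r /dpoly !expr1 expr0 mulr1; ring.
rewrite big_nat_recr //= subnn expr0 mulr1.
have -> : \sum_(0 <= i < N.+1) dpoly R i * 'X^(N.+1 - i) =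
          'X * \sum_(0 <= i < N.+1) dpoly R i * 'X^(N - i).
  rewrite mulr_sumr; apply: eq_big_nat => i /andP [_ hi].
  rewrite subSn; last by lia.
  by rewrite exprS mulrCA.
have -> : \sum_(0 <= i < N.+1) dpoly R i * 'X^(N - i) = N.+1%:R * 'X^N - dpoly R N.+1.
  by rewrite -IH addrK.
rewrite /dpoly !exprS -!natr1; ring.
Qed.

Lemma g_solves y : solves (Lg y) (gg y).
Proof.
split; first by [].
case=> [|N]; first by rewrite big_nat1 !mul0r.
under eq_bigr do rewrite nLg.
rewrite big_nat_recr //= subnn /gg /=.
have -> : \sum_(0 <= i < N.+1) dpoly R i * (y ^+ i)%:P *
      (if (N.+1 - i)%N == 0%N then 1 else 'X^((N.+1 - i).-1) * (y ^+ (N.+1 - i))%:P)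
   = (\sum_(0 <= i < N.+1) dpoly R i * 'X^(N - i)) * (y ^+ N.+1)%:P.
  rewrite mulr_suml; apply: eq_big_nat => i /andP [_ hi].
  have e : (N.+1 - i = (N - i).+1)%N by lia.
  rewrite e /=.
  have e2 : (y ^+ N.+1)%:P = (y ^+ i)%:P * (y ^+ (N - i).+1)%:P.
    rewrite -polyCM -exprD; congr (_%:P); congr (_ ^+ _); lia.
  rewrite e2; ring.
by rewrite mulr1 -mulrDl dsum mulrA.
Qed.

Lemma one_solves (L : nat -> PR) : (forall n, L n = 0) -> solves L (@ps_one _).
Proof.
move=> L0; split; first by [].
move=> N; rewrite big1 => [|n _]; last by rewrite L0 mulr0 mul0r.
by case: N => [|N]; rewrite /ps_one /= ?mul0r ?mulr0.
Qed.

End Prod.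

Arguments dpoly : simpl never.

Section Zeta.
Variable R : realType.
Variable k : nat.
Local Notation PR := {poly R}.

Lemma compl_dec (f : seq nat -> PR) N :
  \sum_(p <- compl (nseq N.+1 k)) f p =
  \sum_(0 <= j < N.+1) \sum_(p <- compl (nseq (N - j) k)) f ((j.+1 * k)%N :: p).
Proof.
elim: N f => [|N IH] f.
  by rewrite big_nat1 /= !big_cons !big_nil mul1n.
change (compl (nseq N.+2 k)) with ([seq k :: p | p <- compl (nseq N.+1 k)] ++
   [seq (k + head 0%N p)%N :: behead p | p <- compl (nseq N.+1 k)]).
rewrite big_cat !big_map (IH (fun p => f ((k + head 0%N p)%N :: behead p))).
by rewrite [RHS]big_nat_recl // subn0 mul1n; congr (_ + _).
Qed.

Lemma compl_mem ks p : p \in compl ks ->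
  (size p <= size ks)%N /\ (all (fun a => 2 <= a)%N ks -> all (fun a => 2 <= a)%N p).
Proof.
elim: ks p => [|a ks IH] p.
  by rewrite /= inE => /eqP ->.
case: ks IH => [|b ks] IH.
  by rewrite /= inE => /eqP ->.
change (compl [:: a, b & ks]) with ([seq a :: q | q <- compl (b :: ks)] ++
   [seq (a + head 0%N q)%N :: behead q | q <- compl (b :: ks)]).
rewrite mem_cat => /orP [/mapP [q hq ->] | /mapP [q hq ->]].
  have [h1 h2] := IH q hq; split; first by rewrite /= ltnS.
  by move=> /= /andP [ha hb]; rewrite ha h2.
have [h1 h2] := IH q hq; split.
  rewrite /= ltnS; apply: leq_trans h1; by rewrite size_behead leq_pred.
move=> /= /andP [ha hb]; have := h2 hb.
case: q {hq h1 h2} => [|c q] /=; first by rewrite addn0 ha.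
move=> /andP [hc hq]; rewrite hq andbT; lia.
Qed.

Definition W M N : PR := \sum_(p <- compl (nseq N k)) 'X^(N - size p) * (zeta_trunc R M p)%:P.
Definition LW M n : PR := if n == 0%N then 0
  else ((n%:R)^-1)%:P * dpoly R n * (zeta_trunc R M [:: (n * k)%N])%:P.
Definition yy M : R := ((M%:R : R) ^+ k)^-1.

Lemma zetaS M a p : (1 <= M)%N ->
  zeta_trunc R M.+1 (a :: p) = zeta_trunc R M (a :: p) + ((M%:R : R) ^+ a)^-1 * zeta_trunc R M p.
Proof. by move=> hM; rewrite /= big_nat_recr. Qed.

Lemma zeta01 M a p : (M <= 1)%N -> zeta_trunc R M (a :: p) = 0.
Proof. by move=> hM; rewrite /= big_geq. Qed.

Lemma W0 M : W M 0 = 1.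
Proof. by rewrite /W /= big_cons big_nil addr0 expr0 mul1r. Qed.

Lemma W_small M N : (M <= 1)%N -> W M N = @ps_one PR N.
Proof.
move=> hM; case: N => [|N]; first by rewrite W0.
rewrite /W compl_dec big1 // => j _; rewrite big1 // => p _.
by rewrite zeta01 // mulr0.
Qed.

Lemma W_rec M N : (1 <= M)%N -> W M.+1 N = ps_mul (gg (yy M)) (W M) N.
Proof.
move=> hM; case: N => [|N]; first by rewrite ps_mulE big_nat1 !W0 mulr1.
rewrite ps_mulE big_nat_recl // subn0 /gg /= mul1r /W !compl_dec.
rewrite -big_split /=; apply: eq_big_nat => j /andP [_ hj].
rewrite subSS mulr_sumr -big_split /=; apply: eq_big_seq => p hp.
have [hs _] := compl_mem hp; rewrite size_nseq in hs.
rewrite big_nat_recr //= polyCD mulrDr; congr (_ + _).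
rewrite polyCM mulrA -[(j.+1 * k)%N]mulnC exprM exprVn /yy.
have -> : (N.+1 - (size p).+1)%N = (j + (N - j - size p))%N by lia.
by rewrite exprD; ring.
Qed.

Lemma LW_rec M n : (1 <= M)%N -> LW M.+1 n = Lg (yy M) n + LW M n.
Proof.
move=> hM; rewrite /LW /Lg; case: eqP => _; first by rewrite addr0.
rewrite zetaS //= mulr1 polyCD mulrDr addrC; congr (_ + _).
by rewrite /yy exprVn -exprM mulnC.
Qed.

Lemma LW_small M n : (M <= 1)%N -> LW M n = 0.
Proof. by move=> hM; rewrite /LW zeta01 // mulr0; case: eqP. Qed.

Lemma W_solves M : solves (LW M) (W M).
Proof.
elim: M => [|M IH].
  apply: (@solves_ext _ (LW 0) _ (@ps_one _)) => // [n|]; first by rewrite W_small.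
  by apply: one_solves => n; rewrite LW_small.
case: M IH => [|M] IH.
  apply: (@solves_ext _ (LW 1) _ (@ps_one _)) => // [n|]; first by rewrite W_small.
  by apply: one_solves => n; rewrite LW_small.
apply: (@solves_ext _ (fun n => Lg (yy M.+1) n + LW M.+1 n) _ (ps_mul (gg (yy M.+1)) (W M.+1))).
- by move=> n /=; rewrite (LW_rec (M := M.+1)).
- by move=> n /=; rewrite (W_rec (M := M.+1)).
exact: solves_mul (g_solves _) IH.
Qed.

Lemma W_exp M N : W M N = ps_exp_trunc N (LW M) N.
Proof.
have h0 : LW M 0 = 0 by rewrite /LW.
exact: (solves_uniq (W_solves M) (exp_solves h0) N).
Qed.

End Zeta.

Import numFieldNormedType.Exports.
Local Open Scope classical_set_scope.
Local Open Scope ring_scope.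
Arguments dpoly : simpl never.

Section Lim.
Variable R : realType.
Local Notation PR := {poly R}.

Definition pcvg (u : nat -> PR) (l : PR) := forall i, (fun M => (u M)`_i) @ \oo --> l`_i.

Lemma rsum_cvg (I : Type) (s : seq I) (u : I -> nat -> R) (l : I -> R) :
  (forall i, u i @ \oo --> l i) ->
  (fun M => \sum_(i <- s) u i M) @ \oo --> \sum_(i <- s) l i.
Proof.
move=> h; elim: s => [|a s IH].
  rewrite big_nil; under eq_fun do rewrite big_nil; exact: cvg_cst.
rewrite big_cons; under eq_fun do rewrite big_cons.
exact: cvgD (h a) IH.
Qed.

Lemma pcvg_cst (c : PR) : pcvg (fun _ => c) c.
Proof. move=> i; exact: cvg_cst. Qed.

Lemma pcvg_add (u v : nat -> PR) (a b : PR) : pcvg u a -> pcvg v b -> pcvg (fun M => u M + v M) (a + b).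
Proof.
move=> hu hv i; rewrite coefD; under eq_fun do rewrite coefD.
exact: cvgD (hu i) (hv i).
Qed.

Lemma pcvg_mul (u v : nat -> PR) (a b : PR) : pcvg u a -> pcvg v b -> pcvg (fun M => u M * v M) (a * b).
Proof.
move=> hu hv i; rewrite coefM; under eq_fun do rewrite coefM.
apply: (rsum_cvg (I := 'I_i.+1) (u := fun (j : 'I_i.+1) M => (u M)`_j * (v M)`_(i - j))
  (l := fun j : 'I_i.+1 => a`_j * b`_(i - j))) => j.
exact: cvgM (hu j) (hv (i - j)%N).
Qed.

Lemma pcvg_sum (I : eqType) (s : seq I) (u : I -> nat -> PR) (l : I -> PR) :
  (forall i, i \in s -> pcvg (u i) (l i)) ->
  pcvg (fun M => \sum_(i <- s) u i M) (\sum_(i <- s) l i).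
Proof.
elim: s => [|a s IH] h.
  rewrite big_nil; under eq_fun do rewrite big_nil; exact: pcvg_cst.
rewrite big_cons; under eq_fun do rewrite big_cons.
apply: pcvg_add; first by apply: h; rewrite inE eqxx.
by apply: IH => i hi; apply: h; rewrite inE hi orbT.
Qed.

Lemma pcvg_polyC (c : nat -> R) (a : R) : c @ \oo --> a -> pcvg (fun M => (c M)%:P) a%:P.
Proof.
move=> h i; rewrite coefC; under eq_fun do rewrite coefC.
by case: eqP => _; [exact: h | exact: cvg_cst].
Qed.

Lemma pcvg_uniq (u : nat -> PR) (a b : PR) : pcvg u a -> pcvg u b -> a = b.
Proof.
move=> ha hb; apply/polyP => i.
have h1 := cvg_lim (@norm_hausdorff _ _) (ha i).
have h2 := cvg_lim (@norm_hausdorff _ _) (hb i).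
exact: (etrans (esym (h1 eventually_filter)) (h2 eventually_filter)).
Qed.

Lemma pcvg_ps_mul (F G : nat -> nat -> PR) F' G' :
  (forall n, pcvg (fun M => F M n) (F' n)) -> (forall n, pcvg (fun M => G M n) (G' n)) ->
  forall N, pcvg (fun M => ps_mul (F M) (G M) N) (ps_mul F' G' N).
Proof.
move=> hF hG N; rewrite ps_mulE; under eq_fun do rewrite ps_mulE.
apply: pcvg_sum => i _; exact: pcvg_mul.
Qed.

Lemma pcvg_pow (L : nat -> nat -> PR) L' m :
  (forall n, pcvg (fun M => L M n) (L' n)) ->
  forall N, pcvg (fun M => ps_pow (L M) m N) (ps_pow L' m N).
Proof.
move=> hL; elim: m => [|m IH] N; first exact: pcvg_cst.
exact: pcvg_ps_mul.
Qed.

Lemma pcvg_exp (L : nat -> nat -> PR) L' K N :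
  (forall n, pcvg (fun M => L M n) (L' n)) ->
  pcvg (fun M => ps_exp_trunc K (L M) N) (ps_exp_trunc K L' N).
Proof.
move=> hL; rewrite expE; under eq_fun do rewrite expE.
apply: pcvg_sum => m _; apply: pcvg_mul; first exact: pcvg_cst.
exact: pcvg_pow.
Qed.

End Lim.

Import numFieldNormedType.Exports.
Local Open Scope classical_set_scope.
Local Open Scope ring_scope.
Arguments dpoly : simpl never.

Section ZC.
Variable R : realType.

Lemma zeta_ge0 M p : 0 <= zeta_trunc R M p.
Proof.
elim: p M => [|a p IH] M /=; first exact: ler01.
apply: sumr_ge0 => m _; apply: mulr_ge0; last exact: IH.
by rewrite invr_ge0 exprn_ge0 // ler0n.
Qed.

Lemma zeta_mono p M : zeta_trunc R M p <= zeta_trunc R M.+1 p.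
Proof.
case: p => [|a p] //=.
case: M => [|M]; first by rewrite !big_geq.
rewrite [X in _ <= X]big_nat_recr //= lerDl; apply: mulr_ge0; last exact: zeta_ge0.
by rewrite invr_ge0 exprn_ge0 // ler0n.
Qed.

Lemma inv_sq_sum n : \sum_(1 <= m < n.+1) ((m%:R : R) ^+ 2)^-1 <= 2 - 2 / n.+1%:R.
Proof.
elim: n => [|n IH]; first by rewrite big_geq // divr1 subrr.
rewrite big_nat_recr //= -[n.+2%:R]natr1.
move: IH; set x : R := n.+1%:R => IH.
have hx : 1 <= x by rewrite /x ler1n.
have key : (x ^+ 2)^-1 <= 2 / x - 2 / (x + 1).
  rewrite -subr_ge0.
  have -> : 2 / x - 2 / (x + 1) - (x ^+ 2)^-1 = (x - 1) / (x ^+ 2 * (x + 1)).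
    field; apply/andP; split; apply/negP => /eqP h; lra.
  apply: divr_ge0; first lra.
  apply: mulr_ge0; [exact: sqr_ge0 | lra].
apply: le_trans (lerD IH key) _; by rewrite addrA subrK.
Qed.

Lemma inv_sq_le2 M : \sum_(1 <= m < M) ((m%:R : R) ^+ 2)^-1 <= 2.
Proof.
case: M => [|n]; first by rewrite big_geq.
apply: le_trans (inv_sq_sum n) _.
by rewrite lerBlDr lerDl divr_ge0 // ler0n.
Qed.

Lemma zeta_bound p M : all (fun a => 2 <= a)%N p -> zeta_trunc R M p <= 2 ^+ size p.
Proof.
elim: p M => [|a p IH] M /=; first by rewrite expr0.
move=> /andP [ha hp]; rewrite exprS.
apply: (@le_trans _ _ (\sum_(1 <= m < M) ((m%:R : R) ^+ 2)^-1 * 2 ^+ size p)).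
  apply: ler_sum_nat => m /andP [hm _].
  apply: ler_pM.
  - by rewrite invr_ge0 exprn_ge0 // ler0n.
  - exact: zeta_ge0.
  - rewrite lef_pV2 ?posrE ?exprn_gt0 ?ltr0n //.
    by apply: ler_weXn2l; [rewrite ler1n | ].
  - exact: IH.
rewrite -mulr_suml mulrC [X in _ <= X]mulrC.
apply: ler_wpM2l; first by rewrite exprn_ge0.
exact: inv_sq_le2.
Qed.

Lemma zeta_cvg p : all (fun a => 2 <= a)%N p ->
  (fun M => zeta_trunc R M p) @ \oo --> mzv R p.
Proof.
move=> hp; rewrite /mzv; apply: nondecreasing_is_cvgn.
  by apply/nondecreasing_seqP => M; exact: zeta_mono.
by exists (2 ^+ size p) => _ [M _ <-]; exact: zeta_bound.
Qed.

End ZC.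

Theorem part2 (R : realType) (k : nat) : (2 <= k)%N -> forall N M : nat, (N <= M)%N ->
  (if N == 0%N then 1 else zetat R (nseq N k)) = ps_exp_trunc M (zlog R k) N.
Proof.
move=> hk N M hNM.
rewrite exp_trunc //.
set Winf := \sum_(p <- compl (nseq N k)) 'X^(N - size p) * (mzv R p)%:P.
have -> : (if N == 0%N then 1 else zetat R (nseq N k)) = Winf.
  case: N {hNM} @Winf => [|N] Winf; last by rewrite /Winf /zetat size_nseq.
  rewrite /Winf /= big_cons big_nil addr0 expr0 mul1r.
  have -> : mzv R [::] = 1.
    rewrite /mzv /=; apply: lim_cst; exact: norm_hausdorff.
  by [].
apply: (pcvg_uniq (u := fun M' => W R k M' N)).
  apply: (pcvg_sum (u := fun p M' => 'X^(N - size p) * (zeta_trunc R M' p)%:P)) => p hp.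
  apply: pcvg_mul; first exact: pcvg_cst.
  apply: pcvg_polyC; apply: zeta_cvg.
  have [_ h] := compl_mem hp; apply: h.
  by rewrite all_nseq hk orbT.
have -> : (fun M' => W R k M' N) = (fun M' => ps_exp_trunc N (LW R k M') N).
  by apply: funext => M'; rewrite W_exp.
apply: pcvg_exp => n.
rewrite /LW /zlog; case: eqP => hn; first exact: pcvg_cst.
apply: pcvg_mul; first exact: pcvg_cst.
apply: pcvg_polyC; apply: zeta_cvg.
rewrite /= andbT; nia.
Qed.

End Helpers.
Import Helpers.

Unset Implicit Arguments. Set Strict Implicit. Set Printing Implicit Defensive.
Local Open Scope ring_scope.

Theorem corollary4p2 (R : realType) (k : nat) (hk : (0 < k)%N) :
  (forall N M : nat, (N <= M)%N -> forall w : word,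
      lccoef (geom_z k N) w = lccoef (hps_exp_trunc M (logX k) N) w)
  /\
  ((2 <= k)%N -> forall N M : nat, (N <= M)%N ->
      (if N == 0%N then 1 else zetat R (nseq N k)) = ps_exp_trunc M (zlog R k) N).
Proof.
split.
- move=> N M hNM w; exact: part1.
- move=> hk2 N M hNM; exact: part2.
Qed.
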